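(* Let $f\in\mathcal{A}_{d,n}$, $b\in\mathcal{A}_{d,m}$, $a\in\mathcal{A}_{e,n+m}$, and let $\sigma$ be a split of $[n+m]$ for which $b\cdot_\sigma f$ is defined (i.e. $\sigma$ consists of an $m$-element subset and its $n$-element complement). Then there exist finitely many $g_1,\dots,g_s\in\mathcal{A}_{e,n}$ and $h_1,\dots,h_s\in\mathcal{A}_{d+e,m}$ such that $a*(b\cdot_\sigma f)=\sum_{i=1}^s h_i\cdot_\sigma(g_i*f)$.
   Context: Let $\mathbf{k}$ be a commutative noetherian ring, $r$ a positive integer, and $\mathcal{A}=\bigoplus_{n,d\ge0}\mathcal{A}_{d,n}$ with $\mathcal{A}_{d,n}=(\mathrm{Sym}^d\mathbf{k}^r)^{\otimes n}$. A split $\sigma$ of $[p+q]$ is a subset $\{i_1<\cdots<i_p\}\subseteq[p+q]$ together with its complement $\{j_1<\cdots<j_q\}$; the shuffle product $\cdot_\sigma:\mathcal{A}_{d,p}\otimes\mathcal{A}_{d,q}\to\mathcal{A}_{d,p+q}$ is $(u_1\otimes\cdots\otimes u_p)\cdot_\sigma(v_1\otimes\cdots\otimes v_q)=w_1\otimes\cdots\otimes w_{p+q}$ with $w_{i_k}=u_k$, $w_{j_k}=v_k$, extended bilinearly. The product $*:\mathcal{A}_{d,n}\otimes\mathcal{A}_{e,n}\to\mathcal{A}_{d+e,n}$ is $(u_1\otimes\cdots\otimes u_n)*(v_1\otimes\cdots\otimes v_n)=u_1v_1\otimes\cdots\otimes u_nv_n$. *)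

(* Defs.v *)
From HB Require Import structures.
From mathcomp Require Import all_boot all_order all_algebra.
From mathcomp Require Export mpoly.
Set Implicit Arguments. Unset Strict Implicit. Unset Printing Implicit Defensive.
Import Order.TTheory GRing.Theory Num.Theory.
Local Open Scope ring_scope.

Definition is_ideal (R : comNzRingType) (I : R -> Prop) : Prop :=
  [/\ I 0, (forall x y, I x -> I y -> I (x + y)) & (forall c x, I x -> I (c * x))].

Definition noetherian (R : comNzRingType) : Prop :=
  forall I : R -> Prop, is_ideal I ->
    exists s : seq R, forall x, I x <-> exists c : 'I_(size s) -> R,
      x = \sum_(t < size s) c t * s`_t.

(* (Sym k^r)^{(x) n} = k[x_1..x_r]^{(x) n} is identified with the polynomial
   ring k[x_{i,j} | i < n, j < r] = {mpoly R[n * r]}; the variable x_{i,j}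
   (j-th variable of the i-th tensor factor) has index [var_of i j]. *)
Definition var_of (n r : nat) (i : 'I_n) (j : 'I_r) : 'I_(n * r) :=
  mxvec_index i j.

Definition blk (n r : nat) (k : 'I_(n * r)) : 'I_n * 'I_r :=
  enum_val (cast_ord (esym (mxvec_cast n r)) k).

(* A_{d,n} = (Sym^d k^r)^{(x) n}: polynomials homogeneous of degree d in each
   block of variables {x_{i,j} | j < r}. *)
Definition inA (R : comNzRingType) (r d n : nat) (u : {mpoly R[n * r]}) : Prop :=
  forall mm, mm \in msupp u -> forall i : 'I_n, (\sum_(j < r) mm (var_of i j))%N = d.

(* Placing tensor factor a (of p factors) at position phi a (of N factors). *)
Definition rename (R : comNzRingType) (r p N : nat) (phi : 'I_p -> 'I_N)
  (u : {mpoly R[p * r]}) : {mpoly R[N * r]} :=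
  mmap (fun c : R => c%:MP_[N * r])
       (fun k : 'I_(p * r) => 'X_(var_of (phi (blk k).1) (blk k).2)) u.

(* A split sigma of [p+q]: the increasing enumeration i_1<..<i_p of a p-subset
   and the increasing enumeration j_1<..<j_q of its complement. *)
Definition is_split (p q : nat) (si : 'I_p -> 'I_(p + q)) (sj : 'I_q -> 'I_(p + q)) : Prop :=
  [/\ {homo si : x y / (x < y)%N}, {homo sj : x y / (x < y)%N},
      (forall x y, si x <> sj y) &
      (forall k, (exists x, si x = k) \/ (exists y, sj y = k))].

(* Shuffle product u ._sigma v (u has p factors, v has q factors); on pure
   tensors (u_1..u_p) ._sigma (v_1..v_q) = w with w_{i_k}=u_k, w_{j_k}=v_k. *)
Definition shuffle (R : comNzRingType) (r p q : nat)
  (si : 'I_p -> 'I_(p + q)) (sj : 'I_q -> 'I_(p + q))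
  (u : {mpoly R[p * r]}) (v : {mpoly R[q * r]}) : {mpoly R[(p + q) * r]} :=
  rename si u * rename sj v.

(* The product * : A_{d,n} (x) A_{e,n} -> A_{d+e,n} is the product of
   polynomials in {mpoly R[n * r]} (factorwise multiplication). *)
Arguments inA {R} r d {n} u.

(* Main.v *)
Require Import Defs.
From HB Require Import structures.
From mathcomp Require Import all_boot all_order all_algebra.
From mathcomp Require Import mpoly.
Import GRing.Theory.
Local Open Scope ring_scope.

Lemma blk_var (n r : nat) i j : blk (var_of (n:=n) (r:=r) i j) = (i, j).
Proof. by rewrite /blk /var_of /mxvec_index cast_ordK enum_rankK. Qed.
Lemma var_blk (n r : nat) k : var_of (n:=n) (r:=r) (blk k).1 (blk k).2 = k.
Proof. by rewrite /blk /var_of /mxvec_index -surjective_pairing enum_valK cast_ordKV. Qed.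

Lemma renameM (R : comNzRingType) r p N (phi : 'I_p -> 'I_N) (u v : {mpoly R[p * r]}) :
  rename phi (u * v) = rename phi u * rename phi v.
Proof. rewrite /rename. exact: ((@mmap_is_multiplicative _ _ _ _ (@mpolyC (N*r) R)).1 u v). Qed.
Lemma renameC (R : comNzRingType) r p N (phi : 'I_p -> 'I_N) (c : R) :
  rename (r:=r) phi c%:MP = c%:MP.
Proof. by rewrite /rename mmapC. Qed.
Lemma renameX (R : comNzRingType) r p N (phi : 'I_p -> 'I_N) mm :
  rename (R:=R) (r:=r) phi 'X_[mm] = \prod_(k < p * r) 'X_(var_of (phi (blk k).1) (blk k).2) ^+ mm k.
Proof. by rewrite /rename mmapX. Qed.
Lemma homo_inj k l (s : 'I_k -> 'I_l) : {homo s : x y / (x < y)%N} -> injective s.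
Proof.
move=> hs x y e; apply/val_inj/eqP; case: (ltngtP x y) => // /hs; by rewrite e ltnn.
Qed.

Lemma prod_split (S : comNzRingType) m n (si : 'I_m -> 'I_(m + n)) (sj : 'I_n -> 'I_(m + n)) (G : 'I_(m+n) -> S) :
  injective si -> injective sj -> (forall x y, si x <> sj y) ->
  (\prod_i G i = \prod_x G (si x) * \prod_y G (sj y))%R.
Proof.
move=> i1 i2 dj.
pose h (z : 'I_m + 'I_n) := match z with inl x => si x | inr y => sj y end.
have hi : injective h.
  by case=> [x|y] [x'|y'] //= e; [rewrite (i1 _ _ e)| case: (dj _ _ e) | case: (dj _ _ (esym e)) | rewrite (i2 _ _ e)].
have hb : bijective h by apply: inj_card_bij => //; rewrite card_sum !card_ord.
rewrite (reindex h); last by apply: onW_bij.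
by rewrite big_sumType.
Qed.

Lemma prod_blk (S : comNzRingType) N r (F : 'I_(N * r) -> S) :
  (\prod_k F k = \prod_(i < N) \prod_(j < r) F (var_of i j))%R.
Proof.
rewrite pair_big /= (reindex (fun p : 'I_N * 'I_r => var_of p.1 p.2)) //.
exists (@blk N r) => [p _|k _]; first by rewrite blk_var; case: p.
exact: var_blk.
Qed.

Definition split1 p N r (phi : 'I_p -> 'I_N) (mm : 'X_{1..N * r}) : 'X_{1..p * r} :=
  [multinom mm (var_of (phi (blk k).1) (blk k).2) | k < p * r].
Arguments split1 {p N r}.

Lemma renameXs (R : comNzRingType) r p N (phi : 'I_p -> 'I_N) (mm : 'X_{1..N * r}) :
  rename (R:=R) phi 'X_[split1 phi mm] =
  \prod_(x < p) \prod_(j < r) 'X_(var_of (phi x) j) ^+ mm (var_of (phi x) j).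
Proof.
rewrite renameX prod_blk; apply: eq_bigr => x _; apply: eq_bigr => j _.
by rewrite /split1 mnmE blk_var.
Qed.

Lemma Xsplit (R : comNzRingType) r m n (si : 'I_m -> 'I_(m + n)) (sj : 'I_n -> 'I_(m + n))
  (mm : 'X_{1..(m + n) * r}) :
  is_split si sj ->
  'X_[mm] = rename (R:=R) si 'X_[split1 si mm] * rename sj 'X_[split1 sj mm].
Proof.
case=> h1 h2 dj _.
rewrite !renameXs mpolyXE_id prod_blk.
by apply: prod_split => //; apply: homo_inj.
Qed.

Lemma inA_split (R : comNzRingType) r p N e (phi : 'I_p -> 'I_N) (a : {mpoly R[N * r]}) mm :
  inA r e a -> mm \in msupp a -> inA (R:=R) r e 'X_[split1 phi mm].
Proof.
move=> ha hm mm'; rewrite msuppX mem_seq1 => /eqP -> x.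
rewrite -(ha _ hm (phi x)); apply: eq_bigr => j _.
by rewrite /split1 mnmE blk_var.
Qed.

Lemma inA_h (R : comNzRingType) r p d e (c : R) (mm : 'X_{1..p * r}) (b : {mpoly R[p * r]}) :
  inA (R:=R) r e 'X_[mm] -> inA r d b -> inA r (d + e) (c%:MP * 'X_[mm] * b).
Proof.
move=> hx hb mm' /msuppM_le /allpairsP [[m1 m2]] /= [m1in m2in ->] i.
rewrite mul_mpolyC in m1in; have := msuppZ_le m1in => m1X.
rewrite (eq_bigr (fun j => m1 (var_of i j) + m2 (var_of i j))%N); last by move=> j _; rewrite mnmDE.
by rewrite big_split /= (hx _ m1X) (hb _ m2in) addnC.
Qed.

Theorem lemma2p1 (R : comNzRingType) (hR : noetherian R) (r : nat) (hr : (0 < r)%N)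
  (d e n m : nat)
  (f : {mpoly R[n * r]}) (b : {mpoly R[m * r]}) (a : {mpoly R[(m + n) * r]})
  (si : 'I_m -> 'I_(m + n)) (sj : 'I_n -> 'I_(m + n)) :
  inA r d f -> inA r d b -> inA r e a -> is_split si sj ->
  exists (s : nat) (g : 'I_s -> {mpoly R[n * r]}) (h : 'I_s -> {mpoly R[m * r]}),
    (forall t, inA r e (g t) /\ inA r (d + e) (h t)) /\
    a * shuffle si sj b f = \sum_(t < s) shuffle si sj (h t) (g t * f).
Proof.
move=> hf hb ha hs.
pose mmt (t : 'I_(size (msupp a))) := nth 0%MM (msupp a) t.
have memt t : mmt t \in msupp a by rewrite mem_nth.
exists (size (msupp a)), (fun t => 'X_[split1 sj (mmt t)]),
  (fun t => (a@_(mmt t))%:MP * 'X_[split1 si (mmt t)] * b).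
split.
  move=> t; split; first exact: inA_split ha (memt t).
  by apply: inA_h => //; apply: inA_split ha (memt t).
have E : a = \sum_(t < size (msupp a)) (a@_(mmt t))%:MP * 'X_[mmt t].
  rewrite {1}[a]mpolyE (big_nth 0%MM) big_mkord; apply: eq_bigr => t _.
  by rewrite mul_mpolyC.
rewrite {1}E big_distrl /=; apply: eq_bigr => t _.
rewrite /shuffle !renameM renameC (@Xsplit R r _ _ _ _ (mmt t) hs).
by rewrite -!mulrA; do 2 congr (_ * _); rewrite mulrCA.
Qed.
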